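(* Let $(X,T)$ be a topological dynamical system and let $K\subset X$ be a compact set. Then $K$ has bounded topological complexity with respect to $\{d_n\}$ if and only if $K$ is equicontinuous.
   Context: A topological dynamical system (t.d.s.) $(X,T)$ consists of a compact metric space $(X,d)$ and a continuous map $T\colon X\to X$. For $n\in\mathbb{N}$ and $x,y\in X$ let $d_n(x,y)=\max\{d(T^ix,T^iy)\colon 0\le i\le n-1\}$, and $B_{d_n}(x,\varepsilon)=\{y\in X\colon d_n(x,y)<\varepsilon\}$. For $K\subset X$ let $\mathrm{span}_K(n,\varepsilon)=\min\{\#(F)\colon F\subset K,\ K\subset\bigcup_{x\in F}B_{d_n}(x,\varepsilon)\}$. A subset $K$ has bounded topological complexity with respect to $\{d_n\}$ if for every $\varepsilon>0$ there is a positive integer $C$ with $\mathrm{span}_K(n,\varepsilon)\le C$ for all $n\ge1$. A subset $K\subset X$ is equicontinuous if for every $\varepsilon>0$ there is $\delta>0$ such that $d(T^nx,T^ny)<\varepsilon$ for all $n\ge 0$ and all $x,y\in K$ with $d(x,y)<\delta$. *)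

(* Defs.v *)
From Stdlib Require Import Reals List.
Open Scope R_scope.

Section Defs.
Context {X : Type} (d : X -> X -> R).

Definition is_metric : Prop :=
  (forall x y, 0 <= d x y) /\
  (forall x y, d x y = 0 <-> x = y) /\
  (forall x y, d x y = d y x) /\
  (forall x y z, d x z <= d x y + d y z).

Definition open_set (U : X -> Prop) : Prop :=
  forall x, U x -> exists r, 0 < r /\ forall y, d x y < r -> U y.

Definition compact_set (K : X -> Prop) : Prop :=
  forall (I : Type) (U : I -> X -> Prop),
    (forall i, open_set (U i)) ->
    (forall x, K x -> exists i, U i x) ->
    exists l : list I, forall x, K x -> exists i, In i l /\ U i x.

Definition compact_space : Prop := compact_set (fun _ => True).

Definition continuous_map (T : X -> X) : Prop :=
  forall x eps, 0 < eps -> exists delta, 0 < delta /\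
    forall y, d x y < delta -> d (T x) (T y) < eps.

Fixpoint iter (T : X -> X) (i : nat) (x : X) : X :=
  match i with O => x | S k => T (iter T k x) end.

(** d_n(x,y) = max_{0 <= i <= n-1} d(T^i x, T^i y)  (d_0 = 0, unused) *)
Fixpoint dn (T : X -> X) (n : nat) (x y : X) : R :=
  match n with
  | O => 0
  | S k => Rmax (dn T k x y) (d (iter T k x) (iter T k y))
  end.

Definition bowen_ball (T : X -> X) (n : nat) (x : X) (eps : R) (y : X) : Prop :=
  dn T n x y < eps.

(** span_K(n,eps) <= C : there is a finite F subset of K, #F <= C,
    with K covered by the Bowen balls centred at F *)
Definition span_le (T : X -> X) (K : X -> Prop) (n : nat) (eps : R) (C : nat) : Prop :=
  exists F : list X,
    (forall x, In x F -> K x) /\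
    (forall y, K y -> exists x, In x F /\ bowen_ball T n x eps y) /\
    (length F <= C)%nat.

Definition bounded_top_complexity (T : X -> X) (K : X -> Prop) : Prop :=
  forall eps, 0 < eps -> exists C : nat, (0 < C)%nat /\
    forall n, (1 <= n)%nat -> span_le T K n eps C.

Definition equicontinuous_set (T : X -> X) (K : X -> Prop) : Prop :=
  forall eps, 0 < eps -> exists delta, 0 < delta /\
    forall (n : nat) x y, K x -> K y -> d x y < delta ->
      d (iter T n x) (iter T n y) < eps.

End Defs.

(* Main.v *)
Require Import Defs.
From Stdlib Require Import Reals List.
From Stdlib Require Import Lra Lia Classical.
Open Scope R_scope.

Lemma dn_ge {X:Type} (d: X->X->R) T n x y i :
  (i < n)%nat -> d (iter T i x) (iter T i y) <= dn d T n x y.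
Proof.
  induction n; intros Hi; [lia|]. simpl.
  destruct (Nat.eq_dec i n) as [->|Hne].
  - apply Rmax_r.
  - eapply Rle_trans; [apply IHn; lia | apply Rmax_l].
Qed.

Lemma dn_lt {X:Type} (d: X->X->R) T n x y e : 0 < e ->
  (forall i, (i < n)%nat -> d (iter T i x) (iter T i y) < e) -> dn d T n x y < e.
Proof.
  intros He; induction n; intros H; simpl; auto.
  apply Rmax_lub_lt; auto.
Qed.

Lemma iter_cont {X:Type} (d: X->X->R) T (hT : continuous_map d T) :
  forall i x e, 0 < e -> exists del, 0 < del /\
    forall y, d x y < del -> d (iter T i x) (iter T i y) < e.
Proof.
  induction i; intros x e He.
  - exists e; simpl; auto.
  - destruct (hT (iter T i x) e He) as [d1 [Hd1 H1]].
    destruct (IHi x d1 Hd1) as [d2 [Hd2 H2]].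
    exists d2; split; auto. intros y Hy; simpl; auto.
Qed.

Lemma iter_cont_upto {X:Type} (d: X->X->R) T (hT : continuous_map d T) :
  forall N x e, 0 < e -> exists del, 0 < del /\
    forall y, d x y < del -> forall i, (i <= N)%nat -> d (iter T i x) (iter T i y) < e.
Proof.
  induction N; intros x e He.
  - exists e; split; auto. intros y Hy i Hi. assert (i = 0%nat) by lia; subst; simpl; auto.
  - destruct (IHN x e He) as [d1 [Hd1 H1]].
    destruct (iter_cont d T hT (S N) x e He) as [d2 [Hd2 H2]].
    exists (Rmin d1 d2); split. apply Rmin_glb_lt; auto.
    intros y Hy i Hi.
    assert (Hy1 : d x y < d1) by (eapply Rlt_le_trans; [apply Hy| apply Rmin_l]).
    assert (Hy2 : d x y < d2) by (eapply Rlt_le_trans; [apply Hy| apply Rmin_r]).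
    destruct (Nat.eq_dec i (S N)) as [->|Hne]; auto.
    apply H1; auto; lia.
Qed.

Fixpoint pw {X:Type} (S : X -> X -> Prop) (L : list X) : Prop :=
  match L with
  | nil => True
  | w :: L' => (forall v, In v L' -> S w v) /\ pw S L'
  end.

Lemma pw_mono {X:Type} (S1 S2 : X -> X -> Prop) :
  (forall w v, S1 w v -> S2 w v) -> forall L, pw S1 L -> pw S2 L.
Proof.
  intros H; induction L as [|a L IH]; simpl; auto.
  intros [H1 H2]; split; auto.
Qed.

Lemma remove_one {X:Type} (F : list X) c : In c F ->
  exists F', length F = S (length F') /\ forall x, In x F -> x = c \/ In x F'.
Proof.
  induction F as [|a F IH]; simpl; [tauto|].
  intros Hc. destruct (classic (a = c)) as [Hac|Hac].
  - exists F; split; auto. intros x [Hx|Hx]; [left; congruence | right; auto].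
  - destruct Hc as [Hc|Hc]; [congruence|].
    destruct (IH Hc) as [F' [Hl HF']].
    exists (a :: F'); split; simpl; [lia|].
    intros x [Hx|Hx]; [right; left; auto|].
    destruct (HF' x Hx); [left; auto | right; right; auto].
Qed.

Lemma count {X:Type} (Cov Sep : X -> X -> Prop) :
  (forall c w v, Cov c w -> Cov c v -> Sep w v -> False) ->
  forall L F, pw Sep L -> (forall w, In w L -> exists c, In c F /\ Cov c w) ->
  (length L <= length F)%nat.
Proof.
  intros Hn; induction L as [|a L IH]; intros F HS HC; simpl; [lia|].
  destruct HS as [Ha HL].
  destruct (HC a (or_introl eq_refl)) as [c [Hc Hca]].
  destruct (remove_one F c Hc) as [F' [Hlen HF']].
  rewrite Hlen. apply le_n_S. apply IH; auto.
  intros w Hw. destruct (HC w (or_intror Hw)) as [c' [Hc' Hcw]].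
  destruct (HF' c' Hc') as [->|Hin].
  - exfalso; eapply Hn; [apply Hca | apply Hcw | apply Ha; auto].
  - eauto.
Qed.

Definition sepP {X:Type} (d : X -> X -> R) T N e (w v : X) : Prop :=
  exists i, (i <= N)%nat /\ e < d (iter T i w) (iter T i v).

Lemma build {X:Type} (d : X -> X -> R) T (K : X -> Prop) z e
  (Hsym : forall x y, d x y = d y x)
  (Htri : forall x y z, d x z <= d x y + d y z)
  (hT : continuous_map d T) (He : 0 < e)
  (Hbad : forall r, 0 < r -> exists y, K y /\ d z y < r /\
            exists n, e <= d (iter T n z) (iter T n y)) :
  forall m, exists N L, length L = m /\
    (forall w, In w L -> K w /\ exists i, (i <= N)%nat /\ e <= d (iter T i z) (iter T i w)) /\
    pw (sepP d T N (e/2)) L.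
Proof.
  induction m.
  - exists 0%nat, nil; simpl; repeat split; tauto.
  - destruct IHm as [N [L [Hl [HL Hp]]]].
    assert (He2 : 0 < e/2) by lra.
    destruct (iter_cont_upto d T hT N z (e/2) He2) as [del [Hdel Hd]].
    destruct (Hbad del Hdel) as [y [Ky [Hzy [n Hn]]]].
    exists (Nat.max N n), (y :: L). split; [simpl; lia|]. split.
    + intros w [<-|Hw].
      * split; auto. exists n; split; auto; lia.
      * destruct (HL w Hw) as [Kw [i [Hi Hi2]]]. split; auto. exists i; split; auto; lia.
    + simpl; split.
      * intros v Hv. destruct (HL v Hv) as [_ [i [Hi Hi2]]].
        exists i; split; [lia|].
        specialize (Hd y Hzy i Hi).
        specialize (Htri (iter T i z) (iter T i y) (iter T i v)). lra.
      * eapply pw_mono; [|apply Hp].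
        intros w v [i [Hi Hi2]]. exists i; split; auto; lia.
Qed.

Lemma pointwise {X:Type} (d : X -> X -> R) T (K : X -> Prop)
  (Hsym : forall x y, d x y = d y x)
  (Htri : forall x y z, d x z <= d x y + d y z)
  (hT : continuous_map d T) (Hbtc : bounded_top_complexity d T K)
  z (Kz : K z) e (He : 0 < e) :
  exists r, 0 < r /\ forall y, K y -> d z y < r -> forall n, d (iter T n z) (iter T n y) < e.
Proof.
  apply NNPP; intro Hno.
  assert (Hbad : forall r, 0 < r -> exists y, K y /\ d z y < r /\
            exists n, e <= d (iter T n z) (iter T n y)).
  { intros r Hr. apply NNPP; intro H2. apply Hno. exists r. split; auto.
    intros y Ky Hy n. apply Rnot_le_lt. intro Hle. apply H2. eauto. }
  assert (He4 : 0 < e/4) by lra.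
  destruct (Hbtc (e/4) He4) as [C [HC0 HC]].
  destruct (build d T K z e Hsym Htri hT He Hbad (S C)) as [N [L [Hl [HL Hp]]]].
  destruct (HC (S N) ltac:(lia)) as [F [HFK [HFcov HFlen]]].
  assert (Hle : (length L <= length F)%nat).
  { apply (count (fun c w => dn d T (S N) c w < e/4) (sepP d T N (e/2))); auto.
    - intros c w v Hcw Hcv [i [Hi Hi2]].
      assert (A1 := dn_ge d T (S N) c w i ltac:(lia)).
      assert (A2 := dn_ge d T (S N) c v i ltac:(lia)).
      specialize (Htri (iter T i w) (iter T i c) (iter T i v)).
      rewrite (Hsym (iter T i w) (iter T i c)) in Htri. lra.
    - intros w Hw. destruct (HL w Hw) as [Kw _].
      destruct (HFcov w Kw) as [x [Hx Hb]]. exists x; split; auto. }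
  lia.
Qed.

Lemma min_list {A:Type} (f : A -> R) (l : list A) :
  (forall a, In a l -> 0 < f a) -> exists del, 0 < del /\ forall a, In a l -> del <= f a.
Proof.
  induction l as [|a l IH]; intros H.
  - exists 1; split; [lra|]. intros a [].
  - destruct IH as [d1 [Hd1 H1]]. { intros b Hb; apply H; right; auto. }
    exists (Rmin d1 (f a)); split.
    + apply Rmin_glb_lt; auto. apply H; left; auto.
    + intros b [<-|Hb]. apply Rmin_r. eapply Rle_trans; [apply Rmin_l| auto].
Qed.

Lemma ball_open {X:Type} (d : X -> X -> R)
  (Htri : forall x y z, d x z <= d x y + d y z) c r :
  Defs.open_set d (fun y => d c y < r).
Proof.
  intros x Hx. exists (r - d c x); split; [lra|].
  intros y Hy. specialize (Htri c x y). lra.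
Qed.

Theorem mainTheorem1 (X : Type) (d : X -> X -> R) (T : X -> X)
  (hmetric : is_metric d) (hcompact : compact_space d)
  (hT : continuous_map d T) (K : X -> Prop) (hK : compact_set d K) :
  bounded_top_complexity d T K <-> equicontinuous_set d T K.
Proof.
  destruct hmetric as [Hpos [Hzero [Hsym Htri]]].
  split.
  - intros Hbtc e He.
    assert (He2 : 0 < e/2) by lra.
    set (I := {p : X * R | K (fst p) /\ 0 < snd p /\
               forall y, K y -> d (fst p) y < 2 * snd p ->
               forall n, d (iter T n (fst p)) (iter T n y) < e/2}).
    destruct (hK I (fun (p : I) y => d (fst (proj1_sig p)) y < snd (proj1_sig p)))
      as [l Hl].
    + intros p. apply ball_open; auto.
    + intros x Kx.
      destruct (pointwise d T K Hsym Htri hT Hbtc x Kx (e/2) He2) as [r [Hr Hrr]].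
      assert (P : K (fst (x, r/2)) /\ 0 < snd (x, r/2) /\
               forall y, K y -> d (fst (x, r/2)) y < 2 * snd (x, r/2) ->
               forall n, d (iter T n (fst (x, r/2))) (iter T n y) < e/2).
      { simpl; split; auto; split; [lra|]. intros y Ky Hy. apply Hrr; auto; lra. }
      exists (exist _ (x, r/2) P). simpl. rewrite (proj2 (Hzero x x) eq_refl). lra.
    + destruct (min_list (fun p : I => snd (proj1_sig p)) l) as [del [Hdel Hdl]].
      { intros [p [Kp [Hp Hq]]] _; simpl; auto. }
      exists del; split; auto.
      intros n x y Kx Ky Hxy.
      destruct (Hl x Kx) as [[[c r] [Kc [Hr Hg]]] [Hin Hcx]]. simpl in *.
      specialize (Hdl _ Hin); simpl in Hdl.
      assert (A1 := Hg x Kx ltac:(lra) n).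
      assert (A2 := Hg y Ky ltac:(specialize (Htri c x y); lra) n).
      specialize (Htri (iter T n x) (iter T n c) (iter T n y)).
      rewrite (Hsym (iter T n x) (iter T n c)) in Htri. lra.
  - intros Heq e He.
    destruct (Heq e He) as [del [Hdel Hd]].
    destruct (hK {x : X | K x} (fun p y => d (proj1_sig p) y < del)) as [l Hl].
    + intros p. apply ball_open; auto.
    + intros x Kx. exists (exist _ x Kx). simpl.
      rewrite (proj2 (Hzero x x) eq_refl). lra.
    + exists (S (length l)). split; [lia|]. intros n Hn.
      exists (map (@proj1_sig _ _) l). split; [|split].
      * intros x Hx. apply in_map_iff in Hx. destruct Hx as [[x' Kx'] [<- _]]. auto.
      * intros y Ky. destruct (Hl y Ky) as [[x Kx] [Hin Hxy]]. simpl in Hxy.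
        exists x. split.
        -- apply in_map_iff. exists (exist _ x Kx). auto.
        -- unfold bowen_ball. apply dn_lt; auto.
      * rewrite length_map. lia.
Qed.
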